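(* Let $A_m(x)=R_{2m}(x)$, $B_m(x)=R_{2m+1}(x)$ and $t=\frac{1+x+x^2}{2x}$. For every integer $m\ge1$, as identities of rational functions in $x$, \[ A_m(x)=x^{m-1}(1+x)U_m(t)-x^{m-2}(1+x+x^2)U_{m-1}(t), \] \[ B_m(x)=x^mU_m(t)+x^{m+2}U_{m-1}(t). \]
   Context: For $n\ge1$ let $\Xi_n$ be the poset on $\{x_1,\dots,x_n\}$ whose cover relations are exactly: $x_2\prec x_1$, $x_3\prec x_2$, and for $3\le i\le n-1$, $x_i\prec x_{i+1}$ if $i$ is odd and $x_{i+1}\prec x_i$ if $i$ is even (so $x_1>x_2>x_3<x_4>x_5<\cdots$). A filter of a poset is an up-closed subset. $\Omega_n$ is the lattice of filters of $\Xi_n$ under reverse inclusion; $\Omega_0$ is the one-element lattice. $R_n(x)=\sum_{F\in\Omega_n}x^{\,n-|F|}$ is the rank generating function of $\Omega_n$, with $R_0(x)=1$. $U_n$ are the Chebyshev polynomials of the second kind: $U_0(y)=1$, $U_1(y)=2y$, $U_n(y)=2yU_{n-1}(y)-U_{n-2}(y)$ for $n\ge2$. *)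

(* Defs.v *)
From mathcomp Require Import all_boot all_order all_algebra.
Set Implicit Arguments. Unset Strict Implicit. Unset Printing Implicit Defensive.
Import GRing.Theory Num.Theory.
Local Open Scope ring_scope.

(* Element x_{i+1} of Xi_n is represented by i : 'I_n (0-indexed).
   xi_cover_nat n a b (1-indexed labels a, b) : x_a is covered by x_b, i.e. x_a ≺ x_b. *)
Definition xi_cover_nat (n a b : nat) : bool :=
  [|| [&& a == 2, b == 1 & (2 <= n)%N],
      [&& a == 3, b == 2 & (3 <= n)%N],
      [&& (3 <= a)%N, odd a, b == a.+1 & (b <= n)%N]
    | [&& (3 <= b)%N, ~~ odd b, a == b.+1 & (a <= n)%N] ].

Definition xi_cover (n : nat) : rel 'I_n :=
  fun i j => xi_cover_nat n i.+1 j.+1.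

Definition xi_le (n : nat) : rel 'I_n := connect (@xi_cover n).

Definition is_filter (n : nat) (F : {set 'I_n}) : bool :=
  [forall i, forall j, (i \in F) && xi_le i j ==> (j \in F)].

Definition Rgen (K : pzRingType) (n : nat) (x : K) : K :=
  \sum_(F : {set 'I_n} | is_filter F) x ^+ (n - #|F|).

Fixpoint chebU (K : pzRingType) (n : nat) (y : K) : K :=
  match n with
  | 0 => 1
  | 1 => 2 * y
  | (k.+1 as n1).+1 => 2 * y * chebU n1 y - chebU k y
  end.

(* Main.v *)
Require Import Defs.
From mathcomp Require Import all_boot all_order all_algebra zify ring.
Set Implicit Arguments. Unset Strict Implicit. Unset Printing Implicit Defensive.
Import GRing.Theory Num.Theory.
Local Open Scope ring_scope.

Lemma is_filterE n (F : {set 'I_n}) :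
  is_filter F = [forall i, forall j, xi_cover i j ==> (i \in F) ==> (j \in F)].
Proof.
apply/forallP/forallP => H i; apply/forallP => j.
- apply/implyP => c; apply/implyP => iF. have := forallP (H i) j.
  by rewrite iF /xi_le connect1.
- apply/implyP => /andP [iF /connectP [p pth ->]].
  elim: p i iF pth => [|a p IH] i iF //=. case/andP => c pth. apply: IH pth.
  by have := forallP (H i) a; rewrite c iF.
Qed.

Lemma xi_cover_mono n a b : (a <= n)%N -> (b <= n)%N ->
  xi_cover_nat n.+1 a b = xi_cover_nat n a b.
Proof.
move=> ha hb; rewrite /xi_cover_nat.
have -> : [&& a == 2%N, b == 1%N & (2 <= n.+1)%N] = [&& a == 2%N, b == 1%N & (2 <= n)%N].
  by case: eqP => //= ea; subst; rewrite ha (leqW ha).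
have -> : [&& a == 3%N, b == 2%N & (3 <= n.+1)%N] = [&& a == 3%N, b == 2%N & (3 <= n)%N].
  by case: eqP => //= ea; subst; rewrite ha (leqW ha).
by rewrite ha hb (leqW ha) (leqW hb).
Qed.

Lemma cover_adj n a b : xi_cover_nat n a b -> (b == a.+1) || (a == b.+1).
Proof.
rewrite /xi_cover_nat; case/or4P.
- by move/and3P=> [/eqP-> /eqP-> _].
- by move/and3P=> [/eqP-> /eqP-> _].
- by case/and4P => _ _ /eqP-> _; rewrite eqxx.
- by case/and4P => _ _ /eqP-> _; rewrite eqxx orbT.
Qed.

Definition ext k (A : {set 'I_k}) (b : bool) : {set 'I_k.+1} :=
  [set i | if unlift ord_max i is Some j then j \in A else b].

Lemma ext_bij k : bijective (fun p : {set 'I_k} * bool => ext p.1 p.2).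
Proof.
exists (fun S : {set 'I_k.+1} => ([set j | lift ord_max j \in S], (@ord_max k) \in S)).
- case=> A b /=; congr pair; last by rewrite inE unlift_none.
  by apply/setP => j; rewrite !inE liftK.
- move=> S; apply/setP => i; rewrite !inE.
  by case: unliftP => [j ->|->]; rewrite ?inE.
Qed.

Lemma in_ext_lift k (A : {set 'I_k}) b j : (lift ord_max j \in ext A b) = (j \in A).
Proof. by rewrite inE liftK. Qed.
Lemma in_ext_max k (A : {set 'I_k}) b : (ord_max \in ext A b) = b.
Proof. by rewrite inE unlift_none. Qed.

Lemma card_ext k (A : {set 'I_k}) b : #|ext A b| = (#|A| + b)%N.
Proof.
rewrite -!sum1_card !big_mkcond /= big_ord_recr /= in_ext_max.
congr (_ + _)%N.
rewrite [RHS]big_mkcond; apply: eq_bigr => i _.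
have -> : widen_ord (leqnSn k) i = lift ord_max i by apply: ord_inj; rewrite lift_max.
by rewrite in_ext_lift.
Qed.

Lemma filter_ext k (A : {set 'I_k}) b :
  is_filter (ext A b) = [&& is_filter A,
    [forall i : 'I_k, xi_cover_nat k.+1 i.+1 k.+1 ==> (i \in A) ==> b] &
    [forall j : 'I_k, xi_cover_nat k.+1 k.+1 j.+1 ==> b ==> (j \in A)]].
Proof.
have cl : forall i j : 'I_k, xi_cover (lift ord_max i) (lift ord_max j) = xi_cover i j.
  move=> i j; rewrite /xi_cover !lift_max xi_cover_mono //.
have m1 : forall i : 'I_k, xi_cover (lift ord_max i) ord_max = xi_cover_nat k.+1 i.+1 k.+1.
  by move=> i; rewrite /xi_cover lift_max.
have m2 : forall i : 'I_k, xi_cover ord_max (lift ord_max i) = xi_cover_nat k.+1 k.+1 i.+1.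
  by move=> i; rewrite /xi_cover lift_max.
have m3 : xi_cover (@ord_max k) ord_max = false.
  by apply/negP => /cover_adj; rewrite orbb => /eqP/n_Sn.
rewrite !is_filterE; apply/forallP/and3P.
- move=> H; split.
  + apply/forallP => i; apply/forallP => j.
    by have := forallP (H (lift ord_max i)) (lift ord_max j); rewrite cl !in_ext_lift.
  + apply/forallP => i.
    by have := forallP (H (lift ord_max i)) ord_max; rewrite m1 in_ext_lift in_ext_max.
  + apply/forallP => i.
    by have := forallP (H ord_max) (lift ord_max i); rewrite m2 in_ext_lift in_ext_max.
- case=> /forallP H1 /forallP H2 /forallP H3 i; apply/forallP => j.
  case: (unliftP ord_max i) => [i' ->|->]; case: (unliftP ord_max j) => [j' ->|->].
  + by rewrite cl !in_ext_lift; have := forallP (H1 i') j'.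
  + by rewrite m1 in_ext_lift in_ext_max; apply: H2.
  + by rewrite m2 in_ext_lift in_ext_max; apply: H3.
  + by rewrite m3.
Qed.

Definition Fs (K : pzRingType) (x : K) k (c : bool) :=
  \sum_(S : {set 'I_k.+1} | is_filter S && ((ord_max \in S) == c)) x ^+ (k.+1 - #|S|).

Definition condA k (A : {set 'I_k}) (c : bool) :=
  [forall i : 'I_k, xi_cover_nat k.+1 i.+1 k.+1 ==> (i \in A) ==> c] &&
  [forall j : 'I_k, xi_cover_nat k.+1 k.+1 j.+1 ==> c ==> (j \in A)].

Lemma Fs_split (K : pzRingType) (x : K) k c :
  Fs x k c = \sum_(A : {set 'I_k} | is_filter A && condA A c)
               (if c then 1 else x) * x ^+ (k - #|A|).
Proof.
rewrite /Fs (reindex _ (onW_bij _ (ext_bij k))) /=.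
rewrite big_mkcond.
rewrite -(pair_bigA _ (fun (A : {set 'I_k}) (b : bool) =>
   if is_filter (ext A b) && ((ord_max \in ext A b) == c)
      then x ^+ (k.+1 - #|ext A b|) else 0)) /=.
rewrite [RHS]big_mkcond; apply: eq_bigr => A _.
rewrite big_bool /= !in_ext_max !filter_ext !card_ext /condA.
have hA : (#|A| <= k)%N by rewrite -[X in (_ <= X)%N]card_ord max_card.
have ft : (false == true) = false by [].
have tf : (true == false) = false by [].
case: c => /=; rewrite ?ft ?tf ?eqxx ?andbT ?andbF ?addr0 ?add0r.
- by rewrite addn1 subSS mul1r.
- by rewrite addn0 subSn // exprS.
Qed.

Definition up k := xi_cover_nat k.+2 k.+1 k.+2.
Definition down k := xi_cover_nat k.+2 k.+2 k.+1.
Definition okd k (d c : bool) := (up k ==> d ==> c) && (down k ==> c ==> d).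

Lemma upE k : up k = (2 <= k)%N && ~~ odd k.
Proof.
rewrite /up /xi_cover_nat. case: k => [|[|k]] //=.
have h : forall n, (n == n.+2) = false by move=> n; apply/negbTE/eqP; lia.
by rewrite !negbK ?andbF !eqSS h eqxx ltnSn /= ?andbF ?andbT ?orbF.
Qed.

Lemma downE k : down k = [|| k == 0%N, k == 1%N | (2 <= k)%N && odd k].
Proof.
rewrite /down /xi_cover_nat. case: k => [|[|k]] //=.
have h : forall n, (n == n.+2) = false by move=> n; apply/negbTE/eqP; lia.
by rewrite !negbK ?andbF !eqSS h eqxx ltnSn /= ?andbF ?andbT ?orbF.
Qed.

Lemma condA_S k (A : {set 'I_k.+1}) c :
  condA A c = (up k ==> (ord_max \in A) ==> c) && (down k ==> c ==> (ord_max \in A)).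
Proof.
rewrite /condA /up /down; congr (_ && _); apply/forallP/idP.
- by move=> H; have := H ord_max.
- move=> H i; case: (eqVneq i ord_max) => [->//|ne].
  have lt : (i < k)%N.
    rewrite ltn_neqAle -ltnS ltn_ord andbT; apply: contra ne => /eqP e.
    by apply/eqP/ord_inj.
  suff -> : xi_cover_nat k.+2 i.+1 k.+2 = false by [].
  by apply/negP => /cover_adj /orP[] /eqP; lia.
- by move=> H; have := H ord_max.
- move=> H i; case: (eqVneq i ord_max) => [->//|ne].
  have lt : (i < k)%N.
    rewrite ltn_neqAle -ltnS ltn_ord andbT; apply: contra ne => /eqP e.
    by apply/eqP/ord_inj.
  suff -> : xi_cover_nat k.+2 k.+2 i.+1 = false by [].
  by apply/negP => /cover_adj /orP[] /eqP; lia.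
Qed.

Lemma big_andb (K : pzRingType) T (P : pred T) (F : T -> K) (b : bool) (r : seq T) :
  \sum_(A <- r | b && P A) F A = if b then \sum_(A <- r | P A) F A else 0.
Proof. by case: b => //; rewrite big_pred0_eq. Qed.

Lemma Fs_step (K : pzRingType) (x : K) k c :
  Fs x k.+1 c = (if c then 1 else x) *
    ((if okd k true c then Fs x k true else 0) + (if okd k false c then Fs x k false else 0)).
Proof.
rewrite Fs_split -mulr_sumr; congr (_ * _).
rewrite (bigID (fun A : {set 'I_k.+1} => ord_max \in A)) /=; congr (_ + _).
- rewrite /Fs -big_andb; apply: eq_bigl => A; rewrite condA_S /okd.
  by case: (ord_max \in A); rewrite /= ?andbT ?andbF // andbC.
- rewrite /Fs -big_andb; apply: eq_bigl => A; rewrite condA_S /okd.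
  by case: (ord_max \in A); rewrite /= ?andbT ?andbF // andbC.
Qed.

Lemma Rgen_Fs (K : pzRingType) (x : K) k : Rgen k.+1 x = Fs x k true + Fs x k false.
Proof.
rewrite /Rgen /Fs (bigID (fun S : {set 'I_k.+1} => ord_max \in S)) /=.
by congr (_ + _); apply: eq_bigl => S; case: (ord_max \in S); rewrite /= ?andbT ?andbF.
Qed.

Lemma Fs0 (K : pzRingType) (x : K) c : Fs x 0 c = if c then 1 else x.
Proof.
rewrite Fs_split (big_pred1 set0).
  by rewrite cards0 expr0 mulr1.
move=> A /=; have -> : A == set0 by apply/eqP/setP => -[].
rewrite /condA is_filterE.
by apply/and3P; split; apply/forallP => -[].
Qed.

Lemma up_even j : up (2 * j.+1) = true.
Proof. by rewrite upE oddM /= andbT; lia. Qed.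
Lemma down_even j : down (2 * j.+1) = false.
Proof. rewrite downE oddM /= andbF orbF; apply/negbTE; lia. Qed.
Lemma up_odd j : up (2 * j).+1 = false.
Proof. by rewrite upE /= oddM /= andbF. Qed.
Lemma down_odd j : down (2 * j).+1 = true.
Proof. rewrite downE /= oddM /=; case: j => [|j] //=; rewrite orbT. Qed.

Section Alg.
Variables (K : numFieldType) (x : K).
Hypothesis hx : x != 0.
Let s := 1 + x + x ^+ 2.
Let t := s / (2 * x).
Let V k := x ^+ k * chebU k t.

Lemma hts : 2 * x * t = s.
Proof.
rewrite /t mulrC -mulrA mulVf ?mulr1 //.
by rewrite mulf_neq0 // pnatr_eq0.
Qed.

Lemma V_rec k : V k.+2 = s * V k.+1 - x ^+ 2 * V k.
Proof.
rewrite /V /= -hts !exprS; ring.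
Qed.

Lemma key j : Fs x (2 * j.+1) true = - x * V j.+1 + (s + x ^+ 3) * V j /\
              Fs x (2 * j.+1) false = (1 + x) * V j.+1 - s * V j.
Proof.
elim: j => [|j [IH1 IH2]].
  rewrite !Fs_step !Fs0 /okd /V /=.
  have h : x ^+ 1 * (2 * t) = s by rewrite expr1 mulrA [x * 2]mulrC hts.
  by rewrite h /s; split; ring.
have e : (2 * j.+2 = (2 * j.+1).+2)%N by lia.
rewrite e [Fs x (2 * j.+1).+2 true]Fs_step [Fs x (2 * j.+1).+2 false]Fs_step.
rewrite [Fs x (2 * j.+1).+1 true]Fs_step [Fs x (2 * j.+1).+1 false]Fs_step /okd up_even down_even up_odd down_odd /= IH1 IH2 V_rec.
by split; rewrite /s; ring.
Qed.
End Alg.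

Theorem mainTheorem5 (K : numFieldType) (m : nat) (x : K) :
  (1 <= m)%N -> x != 0 ->
  let t := (1 + x + x ^+ 2) / (2 * x) in
  Rgen (2 * m) x =
    x ^ (m%:Z - 1) * (1 + x) * chebU m t
    - x ^ (m%:Z - 2) * (1 + x + x ^+ 2) * chebU m.-1 t
  /\
  Rgen (2 * m).+1 x =
    x ^+ m * chebU m t + x ^+ (m + 2) * chebU m.-1 t.
Proof.
move=> hm hx t; rewrite /t.
case: m hm => [//|j] _.
have [H1 H2] := key hx j.
split.
- apply: (mulfI hx).
  have e : (2 * j.+1 = (2 * j).+2)%N by lia.
  have H2' : Fs x (2 * j.+1) false = x * Rgen (2 * j.+1) x.
    by rewrite e Fs_step Rgen_Fs /okd up_odd /= !implybT.
  rewrite -H2' H2.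
  have e1 : ((j.+1)%:Z - 1 = j%:Z)%R by lia.
  have e2 : ((j.+1)%:Z - 2 + 1 = j%:Z)%R by lia.
  have hb : x ^ ((j.+1)%:Z - 2) * x = x ^+ j.
    by rewrite -{2}(expr1z x) -expfzDr // e2.
  set b := x ^ (_ - 2).
  have -> : x * (x ^ ((j.+1)%:Z - 1) * (1 + x) * chebU j.+1 ((1 + x + x ^+ 2) / (2 * x))
     - b * (1 + x + x ^+ 2) * chebU j.+1.-1 ((1 + x + x ^+ 2) / (2 * x)))
     = x * x ^ ((j.+1)%:Z - 1) * (1 + x) * chebU j.+1 ((1 + x + x ^+ 2) / (2 * x))
     - (b * x) * (1 + x + x ^+ 2) * chebU j ((1 + x + x ^+ 2) / (2 * x)).
    by rewrite /=; ring.
  by rewrite hb e1 -exprnP exprS; ring.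
- rewrite Rgen_Fs H1 H2 /= exprD !exprS; ring.
Qed.
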